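(* Let $a, b, n$ be positive integers with $b>1$, $n>1$ and $\gcd(r_b(n),a)=1$, and let $\Bbbk$ be a field. Let $\mathcal{L} \subseteq \mathbb{Z}^n$ be the subgroup generated by the $n-1$ vectors $b\,e_k - (b+1)\,e_{k+1} + e_{k+2}$ for $k = 1, \ldots, n-2$, together with $(a+1)\,e_1 + b\, e_{n-1} - (b+1)\, e_n$ (here $e_1,\dots,e_n$ is the standard basis of $\mathbb{Z}^n$). Then the kernel of the $\Bbbk$-algebra homomorphism $\Bbbk[x_1,\ldots,x_n] \to \Bbbk[t]$, $x_i \mapsto t^{a_i}$, is equal to the ideal generated by $\{x_1^{u_1}\cdots x_n^{u_n} - x_1^{v_1}\cdots x_n^{v_n} \mid u, v \in \mathbb{N}^n,\ u - v \in \mathcal{L}\}$.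
   Context: For an integer $\ell \ge 1$, $r_b(\ell) = \sum_{j=0}^{\ell-1} b^j$, and $r_b(0)=0$. For $i \ge 1$, $a_i := r_b(n) + a\, r_b(i-1)$; $S_a(b,n)$ is the numerical semigroup generated by $a_1,\ldots,a_n$. *)

(* Defs.v *)
From mathcomp Require Import all_boot all_algebra.
From mathcomp Require Import mpoly.
Set Implicit Arguments. Unset Strict Implicit. Unset Printing Implicit Defensive.
Import GRing.Theory.
Local Open Scope ring_scope.

Definition rb (b l : nat) : nat := (\sum_(j < l) b ^ j)%N.

(* exponent a_i for the 0-based index i : 'I_n, i.e. paper's a_{i+1}
   = r_b(n) + a * r_b(i) *)
Definition aexp (a b n : nat) (i : 'I_n) : nat := (rb b n + a * rb b i)%N.

Definition ind (j k : nat) : int := if j == k then 1 else 0.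

(* Paper's generator b e_k - (b+1) e_{k+1} + e_{k+2}, coordinate j (1-based). *)
Definition genL (b k j : nat) : int :=
  (b%:Z) * ind j k - (b.+1)%:Z * ind j k.+1 + ind j k.+2.

(* Paper's last generator (a+1) e_1 + b e_{n-1} - (b+1) e_n, coordinate j (1-based). *)
Definition genLast (a b n j : nat) : int :=
  (a.+1)%:Z * ind j 1 + b%:Z * ind j n.-1 - (b.+1)%:Z * ind j n.

(* w lies in the subgroup L of Z^n generated by the n-1 vectors above
   (coordinate i : 'I_n corresponds to paper's index i+1). *)
Definition inL (a b n : nat) (w : 'I_n -> int) : Prop :=
  exists c : nat -> int, forall i : 'I_n,
    w i = \sum_(1 <= k < n.-1) c k * genL b k i.+1 + c n.-1 * genLast a b n i.+1.

Definition in_ideal_gen (R : comNzRingType) (S : R -> Prop) (p : R) : Prop :=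
  exists (m : nat) (c g : 'I_m -> R), (forall j, S (g j)) /\ p = \sum_(j < m) c j * g j.

Definition binomL (k : comNzRingType) (a b n : nat) (f : {mpoly k[n]}) : Prop :=
  exists u v : 'X_{1..n},
    inL a b (fun i => (u i)%:Z - (v i)%:Z) /\ f = 'X_[u] - 'X_[v].

Definition phiS (k : comNzRingType) (a b n : nat) (p : {mpoly k[n]}) : {poly k} :=
  mmap (@polyC k) (fun i : 'I_n => 'X^(aexp a b i)) p.

(* Main.v *)
Require Import Defs.
From mathcomp Require Import all_boot all_algebra.
From mathcomp Require Import mpoly.
From mathcomp Require Import zify ring.
From Stdlib Require Import ClassicalEpsilon.
Import GRing.Theory.
Local Open Scope ring_scope.
Set Implicit Arguments. Unset Strict Implicit.

Lemma rbS b l : rb b l.+1 = (1 + b * rb b l)%N.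
Proof. by rewrite /rb big_ord_recl expn0 big_distrr /=; congr (_ + _)%N; apply: eq_bigr => i _; rewrite expnS. Qed.

Lemma rb0 b : rb b 0 = 0%N. Proof. by rewrite /rb big_ord0. Qed.

Lemma sum_ind (x : nat -> int) j n :
  \sum_(0 <= i < n) ind i.+1 j * x i = if (0 < j <= n)%N then x j.-1 else 0.
Proof.
elim: n => [|n IH]; first by rewrite big_nil; case: j => [|[]].
rewrite big_nat_recr //= IH /ind.
case: (eqVneq n.+1 j) => [<-|hne] /=.
  by rewrite ltnn ltnSn add0r mul1r.
rewrite mul0r addr0.
case: j hne {IH} => [|j] hne //=.
by rewrite ltnS (leq_eqVlt j n); case: (eqVneq j n) => [e|]; [rewrite e eqxx in hne|].
Qed.

Definition xa (a b n i : nat) : int := ((rb b n + a * rb b i)%N)%:Z.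

Lemma A_genL a b n k : (1 <= k)%N -> (k.+2 <= n)%N ->
  \sum_(0 <= i < n) genL b k i.+1 * xa a b n i = 0.
Proof.
move=> h1 h2.
rewrite (eq_bigr (fun i => b%:Z * (ind i.+1 k * xa a b n i) - (b.+1)%:Z * (ind i.+1 k.+1 * xa a b n i)
   + ind i.+1 k.+2 * xa a b n i)); last first.
  by move=> i _; rewrite /genL; ring.
rewrite big_split sumrB /= -!mulr_sumr !sum_ind.
have -> : (0 < k <= n)%N by lia.
have -> : (0 < k.+1 <= n)%N by lia.
have -> : (0 < k.+2 <= n)%N by lia.
case: k h1 h2 => [//|k] _ _ /=.
rewrite /xa !rbS !PoszD !PoszM; ring.
Qed.

Lemma A_genLast a b n : (1 < n)%N ->
  \sum_(0 <= i < n) genLast a b n i.+1 * xa a b n i = 0.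
Proof.
move=> h.
rewrite (eq_bigr (fun i => (a.+1)%:Z * (ind i.+1 1 * xa a b n i) + b%:Z * (ind i.+1 n.-1 * xa a b n i)
   - (b.+1)%:Z * (ind i.+1 n * xa a b n i))); last first.
  by move=> i _; rewrite /genLast; ring.
rewrite !big_split /= sumrN -!mulr_sumr !sum_ind.
have -> : (0 < 1 <= n)%N by lia.
have -> : (0 < n.-1 <= n)%N by lia.
have -> : (0 < n <= n)%N by lia.
case: n h => [//|[//|n]] _ /=.
rewrite /xa rb0 !rbS !PoszD !PoszM; ring.
Qed.

Section Lat.
Variables (a b n : nat).

Lemma inL_ext (w1 w2 : 'I_n -> int) : (forall i, w1 i = w2 i) -> inL a b w1 -> inL a b w2.
Proof. by move=> e [c hc]; exists c => i; rewrite -e hc. Qed.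

Lemma inL_add (w1 w2 : 'I_n -> int) : inL a b w1 -> inL a b w2 -> inL a b (fun i => w1 i + w2 i).
Proof.
move=> [c1 h1] [c2 h2]; exists (fun k => c1 k + c2 k) => i.
rewrite h1 h2 mulrDl (eq_bigr _ (fun k _ => mulrDl _ _ _)) big_split /=; ring.
Qed.

Lemma inL_scale t (w : 'I_n -> int) : inL a b w -> inL a b (fun i => t * w i).
Proof.
move=> [c h]; exists (fun k => t * c k) => i.
rewrite h mulrDr mulr_sumr; congr (_ + _); last by rewrite mulrA.
by apply: eq_bigr => k _; rewrite mulrA.
Qed.

Lemma inL_genL k : (1 <= k)%N -> (k.+2 <= n)%N -> inL a b (fun i : 'I_n => genL b k i.+1).
Proof.
move=> h1 h2; exists (fun k' => if k' == k then 1 else 0) => i.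
have -> : (n.-1 == k) = false by apply/negbTE; lia.
rewrite mul0r addr0 (big_cat_nat (n := k)); try lia.
rewrite (big_ltn (m := k)); last by lia.
rewrite eqxx mul1r big_nat_cond big1; last first.
  by move=> j /andP[/andP[_ hj] _]; rewrite (ltn_eqF hj) mul0r.
rewrite big_nat_cond big1; last first.
  by move=> j /andP[/andP[hj _] _]; rewrite (gtn_eqF hj) mul0r.
by rewrite -[RHS]/(0 + (genL b k i.+1 + 0)) add0r addr0.
Qed.

Lemma inL_genLast : (1 < n)%N -> inL a b (fun i : 'I_n => genLast a b n i.+1).
Proof.
move=> h1; exists (fun k' => if k' == n.-1 then 1 else 0) => i.
rewrite eqxx mul1r big_nat_cond big1 ?add0r //.
by move=> j /andP[/andP[_ hj] _]; rewrite (ltn_eqF hj) mul0r.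
Qed.

End Lat.

Section Lat2.
Variables (a b n : nat).

Definition vm m j : int := (a.+1)%:Z * ind j 1 + b%:Z * (rb b (n-m))%:Z * ind j m
   - (rb b (n-m).+1)%:Z * ind j m.+1.

Lemma vm_inL : (1 < n)%N -> forall s m, (1 <= m)%N -> (m + s = n.-1)%N ->
  inL a b (fun i : 'I_n => vm m i.+1).
Proof.
move=> hn; elim=> [|s IH] m hm e.
  apply: inL_ext (inL_genLast a b hn) => i.
  have -> : m = n.-1 by lia.
  rewrite /vm.
  have -> : (n - n.-1 = 1)%N by lia.
  have -> : n.-1.+1 = n by lia.
  rewrite /vm /genLast !rbS rb0 /=; ring.
have h := IH m.+1 ltac:(lia) ltac:(lia).
have h2 := inL_scale (rb b (n - m))%:Z (@inL_genL a b n m hm ltac:(lia)).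
apply: inL_ext (inL_add h h2) => i.
rewrite /vm.
have -> : (n - m = s.+2)%N by lia.
have -> : (n - m.+1 = s.+1)%N by lia.
rewrite /vm /genL !rbS !PoszD !PoszM; ring.
Qed.

End Lat2.

Section Lat3.
Variables (a b n : nat).
Hypotheses (hn : (1 < n)%N) (hco : coprime (rb b n) a).

Lemma rb_pos l : (0 < l)%N -> (0 < rb b l)%N.
Proof. by case: l => // l _; rewrite rbS. Qed.

Lemma lat_base (W : nat -> int) : (forall i, (2 <= i)%N -> W i = 0) ->
  \sum_(0 <= i < n) W i * xa a b n i = 0 -> inL a b (fun i : 'I_n => W i).
Proof.
move=> hz hs.
rewrite big_ltn in hs; last by lia.
rewrite big_ltn in hs; last by lia.
rewrite big_nat_cond big1 in hs; last first.
  by move=> i /andP[/andP[hi _] _]; rewrite hz // mul0r.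
rewrite /xa rb0 rbS rb0 in hs.
have e1: (rb b n + a * (1 + b * 0) = rb b n + a)%N by lia.
rewrite e1 muln0 addn0 addr0 PoszD in hs.
set R := (rb b n)%:Z in hs.
have hs' : W 0%N * R + W 1%N * (R + a%:Z) = 0 by [].
have hd : (R %| a%:Z * W 1%N)%Z.
  apply/dvdzP; exists (- (W 0%N + W 1%N)).
  have -> : a%:Z * W 1%N = W 0%N * R + W 1%N * (R + a%:Z) - (W 0%N + W 1%N) * R by ring.
  by rewrite hs' add0r mulNr.
rewrite Gauss_dvdzr in hd; last by rewrite /coprimez /gcdz /=.
case/dvdzP: hd => q hq.
have hR : R != 0 by rewrite /R eqz_nat -lt0n rb_pos //; lia.
have h0 : W 0%N = - q * (R + a%:Z).
  apply: (mulIf hR).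
  have -> : W 0%N * R = W 0%N * R + W 1%N * (R + a%:Z) - W 1%N * (R + a%:Z) by ring.
  by rewrite hs' hq; ring.
have hv := inL_scale (- q) (@vm_inL a b n hn (n - 2) 1 (leqnn 1) ltac:(lia)).
apply: inL_ext hv => i.
rewrite /vm.
have -> : (n - 1 = n.-1)%N by lia.
case: i => [[|[|i]] hi] /=.
- rewrite h0 /R.
  have -> : n = n.-1.+1 by lia.
  rewrite rbS PoszD PoszM /ind /=; ring.
- rewrite hq /R /ind /=.
  have -> : n.-1.+1 = n by lia.
  ring.
- rewrite hz // /ind /=; ring.
Qed.

End Lat3.

Section Lat4.
Variables (a b n : nat).
Hypotheses (hn : (1 < n)%N) (hco : coprime (rb b n) a).

Lemma lat_ind t : forall W : nat -> int, (t + 2 <= n)%N ->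
  (forall i, (t + 2 <= i)%N -> W i = 0) ->
  \sum_(0 <= i < n) W i * xa a b n i = 0 -> inL a b (fun i : 'I_n => W i).
Proof.
elim: t => [|t IH] W ht hz hs; first exact: lat_base.
set j := (t + 2)%N.
pose W' := fun i => W i - W j * genL b j.-1 i.+1.
have hz' : forall i, (t + 2 <= i)%N -> W' i = 0.
  move=> i hi; rewrite /W' /genL /ind.
  have -> : (i.+1 == j.-1) = false by apply/eqP; rewrite /j; lia.
  have -> : (i.+1 == j.-1.+1) = false by apply/eqP; rewrite /j; lia.
  case: (eqVneq i j) => [->|ne].
    have -> : (j.+1 == j.-1.+2) = true by apply/eqP; rewrite /j; lia.
    ring.
  have -> : (i.+1 == j.-1.+2) = false by apply/eqP; rewrite /j; lia.
  rewrite hz; last by rewrite /j in ne *; lia.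
  ring.
have hs' : \sum_(0 <= i < n) W' i * xa a b n i = 0.
  rewrite /W' (eq_bigr (fun i => W i * xa a b n i - W j * (genL b j.-1 i.+1 * xa a b n i))); last first.
    by move=> i _; ring.
  rewrite sumrB -mulr_sumr hs A_genL ?mulr0 ?subr0 //; rewrite /j; lia.
have h1 := IH W' ltac:(lia) hz' hs'.
have h2 := inL_scale (W j) (@inL_genL a b n j.-1 ltac:(rewrite /j; lia) ltac:(rewrite /j; lia)).
apply: inL_ext (inL_add h1 h2) => i.
rewrite /W'; ring.
Qed.

Lemma lattice (W : nat -> int) :
  \sum_(0 <= i < n) W i * xa a b n i = 0 -> inL a b (fun i : 'I_n => W i).
Proof.
move=> hs.
pose W2 := fun i => if (i < n)%N then W i else 0.
have h := @lat_ind (n - 2) W2 ltac:(lia).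
have hW2 : \sum_(0 <= i < n) W2 i * xa a b n i = 0.
  rewrite -[RHS]hs big_nat_cond [RHS]big_nat_cond; apply: eq_bigr => i /andP[/andP[_ hi] _].
  by rewrite /W2 hi.
apply: inL_ext (h _ hW2) => [i|i hi]; first by rewrite /W2 ltn_ord.
by rewrite /W2 ifF //; apply/negbTE; lia.
Qed.

End Lat4.

Lemma inL_A a b n (w : 'I_n -> int) : (1 < n)%N -> inL a b w ->
  \sum_(i < n) w i * xa a b n i = 0.
Proof.
move=> hn [c hc].
rewrite (eq_bigr (fun i : 'I_n => \sum_(1 <= k < n.-1) c k * (genL b k i.+1 * xa a b n i)
   + c n.-1 * (genLast a b n i.+1 * xa a b n i))); last first.
  move=> i _; rewrite hc mulrDl mulr_suml mulrA; congr (_ + _).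
  by apply: eq_bigr => k _; rewrite mulrA.
rewrite big_split /= exchange_big /= -mulr_sumr.
rewrite -(big_mkord xpredT (fun i => genLast a b n i.+1 * xa a b n i)) A_genLast // mulr0 addr0.
rewrite big_nat_cond big1 // => k /andP[/andP[h1 h2] _].
rewrite -mulr_sumr -(big_mkord xpredT (fun i => genL b k i.+1 * xa a b n i)) A_genL ?mulr0 //.
lia.
Qed.
Definition degm a b n (m : 'X_{1..n}) : nat := (\sum_(i < n) m i * aexp a b i)%N.

Lemma phiS_X (k : fieldType) a b n (m : 'X_{1..n}) :
  phiS (k := k) a b 'X_[m] = 'X^(degm a b m).
Proof.
rewrite /phiS mmapX /mmap1 /degm.
rewrite (eq_bigr (fun i => 'X ^+ (aexp a b i * m i))); last by move=> i _; rewrite exprM.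
by rewrite prodrXr; congr (_ ^+ _); apply: eq_bigr => i _; rewrite mulnC.
Qed.

Lemma degm_int a b n (m : 'X_{1..n}) :
  (degm a b m)%:Z = \sum_(i < n) (m i)%:Z * (aexp a b i)%:Z.
Proof. by rewrite /degm (big_morph Posz PoszD (erefl _)); apply: eq_bigr => i _; rewrite PoszM. Qed.

Lemma phiS_binom (k : fieldType) a b n (u v : 'X_{1..n}) : degm a b u = degm a b v ->
  phiS (k := k) a b ('X_[u] - 'X_[v]) = 0.
Proof. by move=> e; rewrite /phiS rmorphB /= -!/(phiS _ _ _) !phiS_X e subrr. Qed.

Lemma phiSM (k : fieldType) a b n (p q : {mpoly k[n]}) :
  phiS a b (p * q) = phiS a b p * phiS a b q.
Proof. by rewrite /phiS rmorphM. Qed.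

Lemma phiS_sum (k : fieldType) a b n m (F : 'I_m -> {mpoly k[n]}) :
  phiS a b (\sum_(j < m) F j) = \sum_(j < m) phiS a b (F j).
Proof. by rewrite /phiS raddf_sum. Qed.

Lemma phiS_sums (k : fieldType) a b n (s : seq 'X_{1..n}) (F : 'X_{1..n} -> {mpoly k[n]}) :
  phiS a b (\sum_(m <- s) F m) = \sum_(m <- s) phiS a b (F m).
Proof. by rewrite /phiS raddf_sum. Qed.

Lemma phiSZ (k : fieldType) a b n c (q : {mpoly k[n]}) :
  phiS a b (c *: q) = c%:P * phiS a b q.
Proof. by rewrite /phiS mmapZ. Qed.

Lemma phiS_ideal (k : fieldType) a b n (S : {mpoly k[n]} -> Prop) p :
  (forall g, S g -> phiS a b g = 0) -> in_ideal_gen S p -> phiS a b p = 0.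
Proof.
move=> hS [m [c [g [hg ->]]]].
rewrite phiS_sum big1 // => j _.
by rewrite phiSM (hS _ (hg j)) mulr0.
Qed.




Section Toric.
Variables (k : fieldType) (a b n : nat).
Variable Bin : {mpoly k[n]} -> Prop.
Hypothesis hBin : forall u v : 'X_{1..n}, degm a b u = degm a b v -> Bin ('X_[u] - 'X_[v]).

Definition rho (d : nat) : 'X_{1..n} :=
  epsilon (inhabits 0%MM) (fun m : 'X_{1..n} => degm a b m = d).

Lemma rhoP (m : 'X_{1..n}) : degm a b (rho (degm a b m)) = degm a b m.
Proof. by apply: (epsilon_spec (inhabits 0%MM) (fun m' => degm a b m' = degm a b m)); exists m. Qed.

Definition psi (N : nat) (f : {poly k}) : {mpoly k[n]} := \sum_(d < N) f`_d *: 'X_[rho d].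

Lemma psiD N f g : psi N (f + g) = psi N f + psi N g.
Proof. by rewrite /psi -big_split; apply: eq_bigr => d _; rewrite coefD scalerDl. Qed.

Lemma psi0 N : psi N 0 = 0.
Proof. by rewrite /psi big1 // => d _; rewrite coef0 scale0r. Qed.

Lemma psiX N c e : (e < N)%N -> psi N (c *: 'X^e) = c *: 'X_[rho e].
Proof.
move=> he; rewrite /psi (bigD1 (Ordinal he)) //= coefZ coefXn eqxx mulr1 big1 ?addr0 //.
move=> d hd; rewrite coefZ coefXn.
have -> : (nat_of_ord d == e) = false.
  by apply/negbTE; apply: contra hd => /eqP hd; apply/eqP/val_inj.
by rewrite mulr0 scale0r.
Qed.

Lemma toric p : phiS a b p = 0 -> in_ideal_gen Bin p.
Proof.
move=> hp.
set s := msupp p.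
set N := (\sum_(m <- s) (degm a b m).+1)%N.
have hN : forall m, m \in s -> (degm a b m < N)%N.
  move=> m hm; rewrite /N (bigD1_seq m) ?msupp_uniq //=; lia.
have Ephi : phiS a b p = \sum_(m <- s) p@_m *: 'X^(degm a b m).
  rewrite {1}(mpolyE p) phiS_sums; apply: eq_bigr => m _.
  by rewrite phiSZ phiS_X mul_polyC.
have Epsi : psi N (\sum_(m <- s) p@_m *: 'X^(degm a b m)) = \sum_(m <- s) p@_m *: 'X_[rho (degm a b m)].
  rewrite (big_morph (psi N) (psiD N) (psi0 N)) big_seq [RHS]big_seq.
  by apply: eq_bigr => m hm; rewrite psiX // hN.
have H0 : \sum_(m <- s) p@_m *: 'X_[rho (degm a b m)] = 0 by rewrite -Epsi -Ephi hp psi0.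
have Ep : p = \sum_(m <- s) (p@_m)%:MP * ('X_[m] - 'X_[rho (degm a b m)]).
  rewrite (eq_bigr (fun m => p@_m *: 'X_[m] - p@_m *: 'X_[rho (degm a b m)])); last first.
    by move=> m _; rewrite mul_mpolyC scalerBr.
  by rewrite sumrB H0 subr0 -mpolyE.
exists (size s), (fun j => (p@_(nth 0%MM s j))%:MP),
  (fun j => 'X_[nth 0%MM s j] - 'X_[rho (degm a b (nth 0%MM s j))]).
split; first by move=> j; apply: hBin; rewrite rhoP.
by rewrite {1}Ep (big_nth 0%MM) big_mkord.
Qed.

End Toric.

Unset Implicit Arguments.

Theorem corollary11 (k : fieldType) (a b n : nat) :
  (0 < a)%N -> (1 < b)%N -> (1 < n)%N -> coprime (rb b n) a ->
  forall p : {mpoly k[n]},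
    phiS a b p = 0 <-> in_ideal_gen (binomL a b (n := n)) p.
Proof.
move=> ha hb hn hco p; split.
- apply: toric => u v e.
  exists u, v; split => //.
  pose W := fun j : nat => if @insub nat (fun x => (x < n)%N) 'I_n j is Some i then (u i)%:Z - (v i)%:Z else 0.
  have hW : forall i : 'I_n, W i = (u i)%:Z - (v i)%:Z by move=> i; rewrite /W valK.
  apply: (inL_ext hW); apply: lattice => //.
  rewrite big_mkord (eq_bigr (fun i : 'I_n => (u i)%:Z * (aexp a b i)%:Z - (v i)%:Z * (aexp a b i)%:Z)).
    by rewrite sumrB -!degm_int e subrr.
  by move=> i _; rewrite hW mulrBl.
- apply: phiS_ideal => g [u [v [hl ->]]].
  apply: phiS_binom.
  have := inL_A hn hl.
  rewrite (eq_bigr (fun i : 'I_n => (u i)%:Z * (aexp a b i)%:Z - (v i)%:Z * (aexp a b i)%:Z)).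
    by rewrite sumrB -!degm_int => /eqP; rewrite subr_eq0 => /eqP [].
  by move=> i _; rewrite mulrBl.
Qed.
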